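(* Assume the standing hypotheses (H). If $\{u,v\}$ is a part of $G$ of size $2$, then $L(u)\cap L(v)=\varnothing$.
   Context: A list assignment $L$ assigns to each vertex $v$ a set $L(v)$ of colors; an $L$-coloring is a proper coloring $f$ with $f(v)\in L(v)$ for all $v$; $\mathrm{ch}$ denotes choice number and $\chi$ chromatic number. A part of a complete multipartite graph is one of its maximal stable sets. Standing hypotheses (H): $k\ge1$ and $n\ge 2k+2$ are integers; $G$ is a complete $k$-partite graph (exactly $k$ nonempty parts) on $n$ vertices; $L$ is a list assignment for $G$ with $|L(v)|\ge\lceil (n+k-1)/3\rceil$ for every vertex $v$; $G$ has no $L$-coloring; $\left|\bigcup_{v\in V(G)}L(v)\right|\le n-1$; and every graph $H$ with fewer than $n$ vertices satisfies $\mathrm{ch}(H)\le\max\{\chi(H),\lceil(|V(H)|+\chi(H)-1)/3\rceil\}$. *)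

(* Defs.v *)
From mathcomp Require Import all_boot.
Set Implicit Arguments. Unset Strict Implicit. Unset Printing Implicit Defensive.

(* A (simple) graph is a relation e on a finite vertex type T, assumed
   symmetric and irreflexive where relevant. Colors are natural numbers;
   a list assignment is L : T -> seq nat, with |L(v)| = size (undup (L v)). *)

Definition list_size (s : seq nat) : nat := size (undup s).

Definition proper_coloring (T : finType) (e : rel T) (f : T -> nat) : Prop :=
  forall x y, e x y -> f x <> f y.

Definition L_colorable (T : finType) (e : rel T) (L : T -> seq nat) : Prop :=
  exists f : T -> nat, (forall v, f v \in L v) /\ proper_coloring e f.

Definition choosable (T : finType) (e : rel T) (k : nat) : Prop :=
  forall L : T -> seq nat, (forall v, k <= list_size (L v)) -> L_colorable e L.

Definition k_colorable (T : finType) (e : rel T) (k : nat) : bool :=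
  [exists f : {ffun T -> 'I_k}, [forall x, forall y, e x y ==> (f x != f y)]].

(* chromatic number: least k <= #|T| such that G is k-colorable
   (always exists for loopless graphs, using #|T| colors). *)
Definition chi (T : finType) (e : rel T) : nat :=
  find (k_colorable e) (iota 0 #|T|.+1).

Definition ceil_div (a b : nat) : nat := (a + b.-1) %/ b.

Definition stable (T : finType) (e : rel T) (S : {set T}) : bool :=
  [forall x in S, forall y in S, ~~ e x y].

(* a part of a complete multipartite graph = a maximal stable set *)
Definition is_part (T : finType) (e : rel T) (S : {set T}) : bool :=
  maxset (stable e) S.

Definition complete_multipartite (T : finType) (e : rel T) (k : nat) : Prop :=
  exists p : T -> 'I_k,
    (forall i : 'I_k, exists v, p v = i) /\ (forall x y, e x y = (p x != p y)).

(* Main.v *)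
Require Import Defs.
From mathcomp Require Import all_boot.
From mathcomp Require Import zify.

Lemma list_size_filter (c : nat) (s : seq nat) :
  list_size s <= (list_size (filter (predC1 c) s)).+1.
Proof.
rewrite /list_size -filter_undup size_filter.
have := count_predC (predC1 c) (undup s).
have : count (predC (predC1 c)) (undup s) <= 1.
  have -> : count (predC (predC1 c)) (undup s) = count_mem c (undup s).
    by apply: eq_count => x /=; rewrite negbK.
  by rewrite count_uniq_mem ?undup_uniq //; case: (c \in _).
lia.
Qed.

Theorem corollary11 (k n : nat) (V : finType) (e : rel V) (L : V -> seq nat) :
  1 <= k ->
  2 * k + 2 <= n ->
  #|V| = n ->
  complete_multipartite e k ->
  (forall v, ceil_div (n + k - 1) 3 <= list_size (L v)) ->
  ~ L_colorable e L ->
  list_size (flatten [seq L v | v <- enum V]) <= n - 1 ->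
  (forall (T : finType) (h : rel T), symmetric h -> irreflexive h ->
     #|T| < n ->
     choosable h (maxn (chi h) (ceil_div (#|T| + chi h - 1) 3))) ->
  forall u v : V, u != v -> is_part e [set u; v] ->
    forall c, c \in L u -> c \notin L v.
Proof.
move=> hk hn hV [p [_ hp]] hL hnc _ hch u v huv hpart c cu.
apply/negP => cv; apply: hnc.
set S := [set u; v] in hpart *.
move/maxsetP: hpart => [hst hmax].
have puv : p u = p v.
  move/forall_inP: hst => /(_ u (set21 _ _)) /forall_inP /(_ v (set22 _ _)).
  by rewrite hp negbK => /eqP.
have pS : forall w, w \in S -> p w = p u.
  by move=> w; rewrite !inE => /orP [] /eqP ->.
have hS : forall w, p w = p u -> w \in S.
  move=> w pw.
  have := hmax (w |: S).
  have st : stable e (w |: S).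
    apply/forall_inP => x hx; apply/forall_inP => y hy.
    have px : p x = p u by move: hx; rewrite in_setU1 => /orP [/eqP -> // | /pS].
    have py : p y = p u by move: hy; rewrite in_setU1 => /orP [/eqP -> // | /pS].
    by rewrite hp px py eqxx.
  move=> /(_ st (subsetUr _ _)) <-.
  by rewrite setU11.
pose T : finType := {w : V | w \notin S}.
pose h : rel T := fun x y => e (val x) (val y).
have hsym : symmetric h by move=> x y; rewrite /h !hp eq_sym.
have hirr : irreflexive h by move=> x; rewrite /h hp eqxx.
have hcard : #|T| = n - 2.
  rewrite card_sig.
  have -> : #|[pred x | x \notin S]| = #|~: S| by apply: eq_card => x; rewrite !inE.
  have := cardsC S; rewrite cards2 huv hV; lia.
have hcardlt : #|T| < n by lia.
have pT : forall w : T, nat_of_ord (p (val w)) != nat_of_ord (p u).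
  move=> w; apply/negP => /eqP /val_inj /hS hw.
  by have := valP w; rewrite hw.
have bnd : forall w : T,
    (if (p (val w) < p u)%N then nat_of_ord (p (val w)) else (p (val w)).-1) < k - 1.
  move=> w; have := pT w; have := ltn_ord (p (val w)); have := ltn_ord (p u).
  case: ifP => /= H; lia.
have kcol : k_colorable h (k - 1).
  apply/existsP; exists [ffun w => Ordinal (bnd w)].
  apply/forallP => x; apply/forallP => y; apply/implyP => exy.
  rewrite !ffunE; apply/negP => /eqP [].
  move: exy; rewrite /h hp -val_eqE /= => hxy.
  have := pT x; have := pT y; move: hxy.
  case: ifP => /= H1; case: ifP => /= H2; lia.
have chib : chi h <= k - 1.
  rewrite /chi leqNgt; apply/negP => lt.
  have := before_find 0 lt; rewrite nth_iota; last by lia.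
  by rewrite add0n kcol.
pose L' : T -> seq nat := fun w => filter (predC1 c) (L (val w)).
have hsize : forall w, maxn (chi h) (ceil_div (#|T| + chi h - 1) 3) <= list_size (L' w).
  move=> w; have := hL (val w); have := list_size_filter c (L (val w)).
  rewrite /L' /ceil_div hcard geq_max /=.
  have := chib; lia.
have [f' [fin fpr]] := hch T h hsym hirr hcardlt L' hsize.
have fnc : forall w, f' w != c.
  by move=> w; have := fin w; rewrite /L' mem_filter => /andP [].
pose f : V -> nat := fun w => if insub w is Some w' then f' w' else c.
exists f; split.
  move=> x; rewrite /f; case: insubP => [w' _ hx | ].
    by have := fin w'; rewrite /L' mem_filter hx => /andP [].
  rewrite negbK !inE => /orP [] /eqP -> //.
move=> x y exy; rewrite /f.
case: insubP => [x' _ hx | ]; case: insubP => [y' _ hy | ].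
- apply: fpr; by rewrite /h hx hy.
- by move=> _ E; move: (fnc x'); rewrite E eqxx.
- by move=> _ E; move: (fnc y'); rewrite -E eqxx.
- rewrite !negbK => /pS py /pS px.
  by move: exy; rewrite hp px py eqxx.
Qed.
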